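(* A 5-ring is $4K_1$-free if and only if it is $2P_3$-free.
   Context: Graphs are finite and simple. $4K_1$ is the edgeless graph on four vertices; $2P_3$ is the disjoint union of two 3-vertex paths; $H$-free means no induced subgraph isomorphic to $H$. A 5-ring is a graph $R$ whose vertex set can be partitioned into nonempty sets $X_0,\dots,X_4$ (indices in $\mathbb{Z}_5$) such that for each $i$, $X_i$ can be ordered as $u^i_1,\dots,u^i_{|X_i|}$ so that $X_i\subseteq N_R[u^i_{|X_i|}]\subseteq\dots\subseteq N_R[u^i_1]=X_{i-1}\cup X_i\cup X_{i+1}$, where $N_R[v]$ denotes the closed neighbourhood of $v$. *)

(* Defs.v *)
From mathcomp Require Import all_boot.
Set Implicit Arguments. Unset Strict Implicit. Unset Printing Implicit Defensive.

(* A finite simple graph: vertex type T : finType, adjacency e : rel T,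
   assumed symmetric and irreflexive (hypotheses of the theorem). *)

Definition cnbhd (T : finType) (e : rel T) (v : T) : {set T} :=
  [set x | (x == v) || e v x].

Definition induced_sub (T : finType) (e : rel T) (k : nat) (h : rel 'I_k) : Prop :=
  exists f : 'I_k -> T, injective f /\ forall a b : 'I_k, e (f a) (f b) = h a b.

Definition H_free (T : finType) (e : rel T) (k : nat) (h : rel 'I_k) : Prop :=
  ~ induced_sub e h.

Definition rel_4K1 : rel 'I_4 := fun _ _ => false.

(* 2P_3: paths 0-1-2 and 3-4-5 *)
Definition rel_2P3 : rel 'I_6 := fun a b =>
  let x := nat_of_ord a in let y := nat_of_ord b in
  [|| (x == 0) && (y == 1), (x == 1) && (y == 0),
      (x == 1) && (y == 2), (x == 2) && (y == 1),
      (x == 3) && (y == 4), (x == 4) && (y == 3),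
      (x == 4) && (y == 5) | (x == 5) && (y == 4)].

(* 5-ring: partition map p : T -> 'I_5 (X_i = p^-1(i), indices mod 5);
   each X_i is nonempty and can be listed as s = [u_1; ...; u_m] with
   X_i ⊆ N[u_m] ⊆ ... ⊆ N[u_1] = X_{i-1} ∪ X_i ∪ X_{i+1}. *)
Definition five_ring (T : finType) (e : rel T) : Prop :=
  exists p : T -> 'I_5,
    forall i : 'I_5,
      let X (j : nat) : {set T} := [set x | nat_of_ord (p x) == j %% 5] in
      (exists x, p x == i) /\
      exists (u1 : T) (s' : seq T),
        [/\ uniq (u1 :: s'),
            (forall x, (x \in u1 :: s') = (p x == i)),
            sorted (fun u v => cnbhd e v \subset cnbhd e u) (u1 :: s'),
            X i \subset cnbhd e (last u1 s') &
            cnbhd e u1 = X (i + 4) :|: X i :|: X (i + 1)].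

(* Main.v *)
Require Import Defs.
From mathcomp Require Import all_boot.

Lemma comb : all (fun a => all (fun b => all (fun c => all (fun d => ~~ uniq [::a;b;c;d] || has (fun j => all (fun m => (j+m)%%5 \in [::a;b;c;d]) [::1;2;3;4]) (iota 0 5)) (iota 0 5)) (iota 0 5)) (iota 0 5)) (iota 0 5).
Proof. by vm_compute. Qed.

Definition near (a b : nat) := (b == (a+4)%%5) || (b == a) || (b == (a+1)%%5).
Lemma nearE (j m1 m2 : nat) : j < 5 -> m1 < 5 -> m2 < 5 -> near ((j+m1)%%5) ((j+m2)%%5) = near m1 m2.
Proof. by case: j => [|[|[|[|[|j]]]]] //; case: m1 => [|[|[|[|[|m1]]]]] //; case: m2 => [|[|[|[|[|m2]]]]]. Qed.
Lemma modE (j m1 m2 : nat) : m1 < 5 -> m2 < 5 -> ((j+m1)%%5 == (j+m2)%%5) = (m1 == m2).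
Proof. by move=> h1 h2; rewrite eqn_modDl !modn_small. Qed.

Theorem proposition6p5 (T : finType) (e : rel T) :
  symmetric e -> irreflexive e -> five_ring e ->
  (H_free e rel_4K1 <-> H_free e rel_2P3).
Proof.
move=> Hsym Hirr [p Hp].
have key : forall x : T, exists u1 s', [/\ x \in u1 :: s', p u1 = p x,
   cnbhd e x \subset cnbhd e u1,
   [set y | nat_of_ord (p y) == p x] \subset cnbhd e x &
   cnbhd e u1 = [set y | nat_of_ord (p y) == (p x + 4) %% 5] :|: [set y | nat_of_ord (p y) == p x] :|: [set y | nat_of_ord (p y) == (p x + 1) %% 5] ].
{ move=> x. have [_ [u1 [s' [Hu Hmem Hs Hlast Hu1]]]] := Hp (p x).
  have Ht : transitive (fun u v : T => cnbhd e v \subset cnbhd e u).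
    by move=> a b c /= Hab Hbc; exact: subset_trans Hbc Hab.
  have Hr : reflexive (fun u v : T => cnbhd e v \subset cnbhd e u) by move=> a /=.
  have xin : x \in u1 :: s' by rewrite Hmem.
  have Hn := sorted_leq_nth Ht Hr x Hs.
  have ix : index x (u1 :: s') < size (u1 :: s') by rewrite index_mem.
  rewrite modn_small // in Hlast Hu1.
  exists u1, s'; split => //.
  - by apply/eqP; rewrite -Hmem mem_head.
  - have := Hn 0 (index x (u1 :: s')); rewrite nth_index //; apply => //.
  - have := Hn (index x (u1 :: s')) (size s'); rewrite nth_index //.
    have -> : nth x (u1 :: s') (size s') = last u1 s' by rewrite (nth_last x (u1 :: s')).
    move=> H; apply: subset_trans Hlast (H _ _ _) => //; rewrite inE /=.
    by move: ix => /=; rewrite ltnS. }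
have Nb : forall x y, e x y -> near (p x) (p y).
{ move=> x y exy. have [u1 [s' [_ _ Hsub _ Hu1]]] := key x.
  have : y \in cnbhd e u1 by apply: (subsetP Hsub); rewrite inE exy orbT.
  by rewrite Hu1 !inE. }
have Cl : forall x y, p x = p y -> x != y -> e x y.
{ move=> x y pxy nxy. have [u1 [s' [_ _ _ Hl _]]] := key x.
  have : y \in cnbhd e x by apply: (subsetP Hl); rewrite inE pxy.
  by rewrite inE eq_sym (negbTE nxy). }
have Top : forall i : 'I_5, exists u, p u = i /\ forall y, near i (p y) -> y != u -> e u y.
{ move=> i. have [[x /eqP px] _] := Hp i. have [u1 [s' [_ pu _ _ Hu1]]] := key x.
  exists u1; split; first by rewrite pu.
  move=> y ny yu. have : y \in cnbhd e u1 by rewrite Hu1 !inE px.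
  by rewrite inE (negbTE yu). }
have Far : forall x y, ~~ near (p x) (p y) -> e x y = false.
{ by move=> x y; apply: contraNF; exact: Nb. }
have Dp : forall x y, nat_of_ord (p x) != p y -> x != y.
{ by move=> x y; apply: contraNneq => ->. }
split.
- move=> H4 [g [gi ge]]; apply: H4.
  pose m (k : 'I_4) : 'I_6 := inord (nth 0 [:: 0;2;3;5] k).
  have lt6 : forall k : 'I_4, nth 0 [:: 0;2;3;5] k < 6 by case=> [[|[|[|[|?]]]] ?].
  exists (g \o m); split.
  + apply: inj_comp => // a b /(congr1 (@nat_of_ord 6)); rewrite /m !inordK //.
    by move/eqP; rewrite nth_uniq // => /eqP; apply: val_inj.
  + move=> a b /=; rewrite ge /rel_2P3 /m !inordK //.
    by case: a b => [[|[|[|[|?]]]] ?] [[|[|[|[|?]]]] ?].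
- move=> H2 [f [fi fe]]. apply: H2.
  have fe0 : forall a b, e (f a) (f b) = false by move=> a b; rewrite fe.
  have qv : forall a b, nat_of_ord (p (f a)) = p (f b) -> a = b.
  { move=> a b /val_inj pab; apply: fi; apply/eqP.
    by apply: contraFT (fe0 a b) => /(Cl _ _ pab). }
  pose k0 : 'I_4 := inord 0. pose k1 : 'I_4 := inord 1.
  pose k2 : 'I_4 := inord 2. pose k3 : 'I_4 := inord 3.
  have U : uniq [:: nat_of_ord (p (f k0)); nat_of_ord (p (f k1)); nat_of_ord (p (f k2)); nat_of_ord (p (f k3))].
  { have -> : [:: nat_of_ord (p (f k0)); nat_of_ord (p (f k1)); nat_of_ord (p (f k2)); nat_of_ord (p (f k3))]
       = map (fun k => nat_of_ord (p (f k))) [:: k0; k1; k2; k3] by [].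
    rewrite map_inj_uniq; last by move=> a b /qv.
    by rewrite /= !inE -!val_eqE /= !inordK. }
  have iot : forall k, nat_of_ord (p (f k)) \in iota 0 5 by move=> k; rewrite mem_iota /=.
  have allE : forall (X : eqType) (a : pred X) s x, all a s -> x \in s -> a x.
  { by move=> ? ? ? ? /allP; apply. }
  move: (allE _ _ _ _ (allE _ _ _ _ (allE _ _ _ _ (allE _ _ _ _ comb (iot k0)) (iot k1)) (iot k2)) (iot k3)).
  rewrite U => /orP [//|/hasP [j]]. rewrite mem_iota /= => jlt /and5P [M1 M2 M3 M4 _].
  have pick : forall m, (j+m)%%5 \in [:: nat_of_ord (p (f k0)); nat_of_ord (p (f k1)); nat_of_ord (p (f k2)); nat_of_ord (p (f k3))] -> exists k, nat_of_ord (p (f k)) = (j+m)%%5.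
  { move=> m; rewrite !inE => /or4P [] /eqP ->; by eexists. }
  have [q1 P1] := pick 1 M1. have [q2 P2] := pick 2 M2.
  have [q3 P3] := pick 3 M3. have [q4 P4] := pick 4 M4.
  have [h1 [Ph1 T1]] := Top (inord ((j+1)%%5)).
  have [h4 [Ph4 T4]] := Top (inord ((j+4)%%5)).
  have Ph1' : nat_of_ord (p h1) = (j+1)%%5 by rewrite Ph1 inordK // ltn_pmod.
  have Ph4' : nat_of_ord (p h4) = (j+4)%%5 by rewrite Ph4 inordK // ltn_pmod.
  rewrite inordK ?ltn_pmod // in T1. rewrite inordK ?ltn_pmod // in T4.
  clear Ph1 Ph4.
  set a1 := f q1 in P1 *. set a2 := f q2 in P2 *.
  set a3 := f q3 in P3 *. set a4 := f q4 in P4 *.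
  have NE : forall m1 m2 x y, m1 < 5 -> m2 < 5 -> nat_of_ord (p x) = (j+m1)%%5 -> nat_of_ord (p y) = (j+m2)%%5 -> near (p x) (p y) = near m1 m2.
  { by move=> m1 m2 x y ? ? -> ->; rewrite nearE. }
  have DE : forall m1 m2 x y, m1 < 5 -> m2 < 5 -> nat_of_ord (p x) = (j+m1)%%5 -> nat_of_ord (p y) = (j+m2)%%5 -> m1 != m2 -> x != y.
  { by move=> m1 m2 x y ? ? hx hy hm; apply: Dp; rewrite hx hy modE. }
  have E12 : e h1 a2.
  { apply: T1; first by rewrite -Ph1' (NE 1 2).
    exact: (DE 2 1). }
  have E43 : e h4 a3.
  { apply: T4; first by rewrite -Ph4' (NE 4 3).
    exact: (DE 3 4). }
  have N1 : a1 != h1.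
  { apply/eqP => E; move: (fe0 q1 q2); rewrite -/a1 -/a2 E E12 //. }
  have N4 : a4 != h4.
  { apply/eqP => E; move: (fe0 q4 q3); rewrite -/a3 -/a4 E E43 //. }
  have E10 : e h1 a1.
  { by apply: T1 => //; rewrite -Ph1' (NE 1 1). }
  have E45 : e h4 a4.
  { by apply: T4 => //; rewrite -Ph4' (NE 4 4). }
  pose l := [:: a1; h1; a2; a3; h4; a4].
  have Ul : uniq l.
  { rewrite /l /= !inE !negb_or.
    repeat (apply/andP; split).
    all: try by rewrite // eq_sym.
    all: match goal with |- is_true (?x != ?y) => match goal with
           Hx : nat_of_ord (_ x) = _, Hy : nat_of_ord (_ y) = _ |- _ =>
             by apply: (DE _ _ _ _ _ _ Hx Hy) end end. }
  exists (fun t : 'I_6 => nth a1 l t); split.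
  + move=> s t /eqP; rewrite nth_uniq // => /eqP; exact: val_inj.
  + move=> s t; case: s t => [[|[|[|[|[|[|?]]]]]] ?] [[|[|[|[|[|[|?]]]]]] ?] //; rewrite /rel_2P3 /=.
    all: first [ by rewrite Hirr | by rewrite ?E10 ?E12 ?E43 ?E45
               | by rewrite Hsym ?E10 ?E12 ?E43 ?E45 | by apply: fe0
               | match goal with
                   Hx : nat_of_ord (_ ?x) = _, Hy : nat_of_ord (_ ?y) = _ |- _ =>
                   by rewrite Far ?(NE _ _ _ _ _ _ Hx Hy) end ].
Qed.
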